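(* Let $X$ be a locally compact Hausdorff space and $\zeta$ a quasi-integral on $X$. Then the set function $\tau_\zeta:\mathcal A(X)\to[0,\infty)$ defined by $$\tau_\zeta(K)=\inf\{\zeta(f)\mid f\in C_c(X),\ f\ge \mathbf 1_K\},\qquad \tau_\zeta(O)=\sup\{\zeta(f)\mid f\in C_c(X),\ f\le \mathbf 1_O\}$$ ($K\in\mathcal K(X)$, $O\in\mathcal O(X)$) is a topological measure on $X$.
   Context: $C_c(X)$: continuous real functions with compact support, uniform norm; $\mathbf 1_A$: indicator function. A quasi-integral on $X$ is a functional $\eta:C_c(X)\to\mathbb R$ such that: (i) $\eta(f)\le\eta(g)$ whenever $f\le g$; (ii) for every compact $K\subset X$ there is $N_K\ge0$ with $|\eta(f)-\eta(g)|\le N_K\|f-g\|$ for all $f,g$ supported in $K$; (iii) for every $f\in C_c(X)$, $\eta$ is linear on $\{\phi\circ f\mid \phi\in C(\mathbb R),\ \phi(0)=0\}$. $\mathcal K(X)$: compact subsets; $\mathcal O(X)$: open subsets with compact closure; $\mathcal A(X)=\mathcal K(X)\cup\mathcal O(X)$. A topological measure is $\tau:\mathcal A(X)\to[0,\infty)$ with: (additivity) $\tau(A\cup A')=\tau(A)+\tau(A')$ for disjoint $A,A'\in\mathcal A(X)$ with $A\cup A'\in\mathcal A(X)$; (monotonicity) $\tau(A)\le\tau(A')$ for $A\subset A'$; (regularity) $\tau(K)=\inf\{\tau(O)\mid O\in\mathcal O(X),O\supset K\}$ and $\tau(O)=\sup\{\tau(K)\mid K\in\mathcal K(X),K\subset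 O\}$. *)

(* Defs.v *)
From Stdlib Require Import Reals Lra Classical ClassicalEpsilon.
Open Scope R_scope.

Record TopSpace : Type := {
  carrier :> Type;
  is_open : (carrier -> Prop) -> Prop;
  open_full : is_open (fun _ => True);
  open_inter : forall U V, is_open U -> is_open V -> is_open (fun x => U x /\ V x);
  open_union : forall F : (carrier -> Prop) -> Prop,
      (forall U, F U -> is_open U) -> is_open (fun x => exists U, F U /\ U x)
}.

Section Topology.
Variable X : TopSpace.

Definition subset (A B : X -> Prop) : Prop := forall x, A x -> B x.

Definition is_closed (C : X -> Prop) : Prop := is_open X (fun x => ~ C x).

Definition closure (A : X -> Prop) : X -> Prop :=
  fun x => forall C, is_closed C -> subset A C -> C x.

Definition compact (K : X -> Prop) : Prop :=
  forall F : (X -> Prop) -> Prop,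
    (forall U, F U -> is_open X U) ->
    subset K (fun x => exists U, F U /\ U x) ->
    exists l : list (X -> Prop),
      (forall U, List.In U l -> F U) /\
      subset K (fun x => exists U, List.In U l /\ U x).

Definition hausdorff : Prop :=
  forall x y : X, x <> y ->
    exists U V, is_open X U /\ is_open X V /\ U x /\ V y /\
      (forall z, ~ (U z /\ V z)).

Definition locally_compact : Prop :=
  forall x : X, exists U, is_open X U /\ U x /\ compact (closure U).

Definition R_open (V : R -> Prop) : Prop :=
  forall y, V y -> exists e, 0 < e /\ forall z, Rabs (z - y) < e -> V z.

Definition continuous (f : X -> R) : Prop :=
  forall V, R_open V -> is_open X (fun x => V (f x)).

Definition support (f : X -> R) : X -> Prop := closure (fun x => f x <> 0).

Definition Cc (f : X -> R) : Prop := continuous f /\ compact (support f).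

Definition supported_in (f : X -> R) (K : X -> Prop) : Prop := subset (support f) K.

(** [unif_bound h c] : ||h|| <= c for the uniform norm ||h|| = sup |h| ;
    the uniform norm is the least c >= 0 with this property. *)
Definition unif_bound (h : X -> R) (c : R) : Prop :=
  0 <= c /\ forall x, Rabs (h x) <= c.

Definition quasi_integral (eta : (X -> R) -> R) : Prop :=
  (forall f g, Cc f -> Cc g -> (forall x, f x <= g x) -> eta f <= eta g) /\
  (forall K, compact K -> exists NK, 0 <= NK /\
     forall f g, Cc f -> Cc g -> supported_in f K -> supported_in g K ->
       forall c, unif_bound (fun x => f x - g x) c ->
         Rabs (eta f - eta g) <= NK * c) /\
  (* (iii) linearity on the singly generated subalgebra {phi o f | phi in C(R), phi 0 = 0} *)
  (forall f, Cc f ->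
     forall (phi psi : R -> R) (a b : R),
       continuity phi -> phi 0 = 0 -> continuity psi -> psi 0 = 0 ->
       eta (fun x => a * phi (f x) + b * psi (f x))
         = a * eta (fun x => phi (f x)) + b * eta (fun x => psi (f x))).

Definition in_K (A : X -> Prop) : Prop := compact A.
Definition in_O (A : X -> Prop) : Prop := is_open X A /\ compact (closure A).
Definition in_A (A : X -> Prop) : Prop := in_K A \/ in_O A.

Definition is_glb (S : R -> Prop) (m : R) : Prop :=
  (forall y, S y -> m <= y) /\ (forall b, (forall y, S y -> b <= y) -> b <= m).

Definition topological_measure (tau : (X -> Prop) -> R) : Prop :=
  (forall A, in_A A -> 0 <= tau A) /\
  (forall A A', in_A A -> in_A A' -> (forall x, ~ (A x /\ A' x)) ->
     in_A (fun x => A x \/ A' x) ->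
     tau (fun x => A x \/ A' x) = tau A + tau A') /\
  (forall A A', in_A A -> in_A A' -> subset A A' -> tau A <= tau A') /\
  (forall K, in_K K ->
     is_glb (fun r => exists O, in_O O /\ subset K O /\ r = tau O) (tau K)) /\
  (forall O, in_O O ->
     is_lub (fun r => exists K, in_K K /\ subset K O /\ r = tau K) (tau O)).

Definition indicator (A : X -> Prop) (x : X) : R :=
  if excluded_middle_informative (A x) then 1 else 0.

End Topology.

(** supremum / infimum of a set of reals (chosen by classical choice;
    meaningful when the set is nonempty and bounded) *)
Definition Rsup (S : R -> Prop) : R := epsilon (inhabits 0) (fun s => is_lub S s).
Definition Rinf (S : R -> Prop) : R := - Rsup (fun y => S (- y)).

Definition tau_of (X : TopSpace) (zeta : (X -> R) -> R) (A : X -> Prop) : R :=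
  if excluded_middle_informative (compact X A) then
    Rinf (fun r => exists f, Cc X f /\ (forall x, indicator X A x <= f x) /\ r = zeta f)
  else
    Rsup (fun r => exists f, Cc X f /\ (forall x, f x <= indicator X A x) /\ r = zeta f).

(* Main.v *)
From Stdlib Require Import Reals Lra Lia Arith ZArith Classical ClassicalEpsilon FunctionalExtensionality PropExtensionality List.
Require Import Defs.
Open Scope R_scope.

Section Topo.
Variable X : TopSpace.

Lemma pred_ext (A B : X -> Prop) : (forall x, A x <-> B x) -> A = B.
Proof. intros H; apply functional_extensionality; intros x; apply propositional_extensionality; auto. Qed.

Lemma open_ext (A B : X -> Prop) : (forall x, A x <-> B x) -> is_open X A -> is_open X B.
Proof. intros H; rewrite (pred_ext A B H); auto. Qed.

Lemma open_empty : is_open X (fun _ => False).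
Proof.
  apply (open_ext (fun x => exists U, (fun _ : X -> Prop => False) U /\ U x)).
  - intros x; split; [intros [U [[] _]] | intros []].
  - apply open_union; intros U [].
Qed.

Lemma open_or (A B : X -> Prop) : is_open X A -> is_open X B -> is_open X (fun x => A x \/ B x).
Proof.
  intros HA HB.
  apply (open_ext (fun x => exists U, (fun U => U = A \/ U = B) U /\ U x)).
  - intros x; split.
    + intros [U [[->| ->] H]]; auto.
    + intros [H|H]; [exists A|exists B]; auto.
  - apply open_union; intros U [->| ->]; auto.
Qed.

Lemma open_Union (P : (X -> Prop) -> Prop) (A : X -> Prop) :
  (forall U, P U -> is_open X U) -> (forall x, A x <-> exists U, P U /\ U x) -> is_open X A.
Proof. intros H1 H2. apply (open_ext (fun x => exists U, P U /\ U x)). intros x; rewrite H2; reflexivity. apply open_union; auto. Qed.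

Lemma open_local (A : X -> Prop) :
  (forall x, A x -> exists U, is_open X U /\ U x /\ subset X U A) -> is_open X A.
Proof.
  intros H. apply (open_Union (fun U => is_open X U /\ subset X U A)).
  - intros U [? ?]; auto.
  - intros x; split.
    + intros Hx; destruct (H x Hx) as [U [? [? ?]]]; exists U; auto.
    + intros [U [[_ HU] Hx]]; auto.
Qed.

Lemma closure_incl A : subset X A (closure X A).
Proof. intros x Hx C _ HC; auto. Qed.

Lemma closure_closed A : is_closed X (closure X A).
Proof.
  unfold is_closed.
  apply (open_Union (fun U => exists C, is_closed X C /\ subset X A C /\ U = (fun x => ~ C x))).
  - intros U [C [HC [_ ->]]]; auto.
  - intros x; split.
    + intros Hx. apply not_all_ex_not in Hx. destruct Hx as [C HC].
      apply imply_to_and in HC; destruct HC as [HC1 HC2].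
      apply imply_to_and in HC2; destruct HC2 as [HC2 HC3].
      exists (fun x => ~ C x); split; auto. exists C; auto.
    + intros [U [[C [HC1 [HC2 ->]]] HU]] Hcl. apply HU, Hcl; auto.
Qed.

Lemma closure_min A C : is_closed X C -> subset X A C -> subset X (closure X A) C.
Proof. intros H1 H2 x Hx; apply Hx; auto. Qed.

Lemma closure_mono A B : subset X A B -> subset X (closure X A) (closure X B).
Proof. intros H. apply closure_min. apply closure_closed. intros x Hx; apply closure_incl; auto. Qed.

Lemma closed_ext (A B : X -> Prop) : (forall x, A x <-> B x) -> is_closed X A -> is_closed X B.
Proof. intros H; rewrite (pred_ext A B H); auto. Qed.

Lemma closed_or A B : is_closed X A -> is_closed X B -> is_closed X (fun x => A x \/ B x).
Proof.
  intros HA HB; unfold is_closed.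
  apply (open_ext (fun x => ~ A x /\ ~ B x)). intros x; tauto.
  apply open_inter; auto.
Qed.

Lemma closed_and A B : is_closed X A -> is_closed X B -> is_closed X (fun x => A x /\ B x).
Proof.
  intros HA HB; unfold is_closed.
  apply (open_ext (fun x => ~ A x \/ ~ B x)). intros x; tauto.
  apply open_or; auto.
Qed.

Lemma closed_compl_open A : is_open X A -> is_closed X (fun x => ~ A x).
Proof. intros H; unfold is_closed. eapply open_ext; [|exact H]. intros x; tauto. Qed.

Lemma open_compl_closed A : is_closed X A -> is_open X (fun x => ~ A x).
Proof. auto. Qed.

Lemma compact_ext (A B : X -> Prop) : (forall x, A x <-> B x) -> compact X A -> compact X B.
Proof. intros H; rewrite (pred_ext A B H); auto. Qed.

Lemma list_remove (F : (X -> Prop) -> Prop) (D : X -> Prop) (l : list (X -> Prop)) :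
  (forall U, In U (D :: l) -> F U \/ U = D) ->
  exists l', (forall U, In U l' -> F U) /\
    forall x, (exists U, In U l /\ U x) -> (exists U, In U l' /\ U x) \/ D x.
Proof.
  induction l as [|V l IH]; intros H.
  - exists nil; split; [intros U []|]. intros x [U [[] _]].
  - destruct IH as [l' [H1 H2]].
    { intros U [<-|HU]; apply H; simpl; auto. }
    destruct (H V) as [HV|HV]; [simpl; auto| |].
    + exists (V :: l'); split.
      * intros U [<-|HU]; auto.
      * intros x [U [HU Hx]]. destruct HU as [HU|HU].
        -- left; exists U; simpl; auto.
        -- destruct (H2 x) as [[U' [? ?]]|]; [exists U; auto| left; exists U'; simpl; auto | auto].
    + exists l'; split; auto.
      intros x [U [HU Hx]]. destruct HU as [HU|HU]; [subst; auto|]. apply H2; exists U; auto.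
Qed.

Lemma compact_closed_inter K C : compact X K -> is_closed X C -> compact X (fun x => K x /\ C x).
Proof.
  intros HK HC F HF Hcov.
  destruct (HK (fun U => F U \/ U = (fun x => ~ C x))) as [l [Hl1 Hl2]].
  - intros U [H| ->]; auto.
  - intros x Hx. destruct (classic (C x)) as [Hc|Hc].
    + destruct (Hcov x (conj Hx Hc)) as [U [? ?]]; exists U; auto.
    + exists (fun x => ~ C x); auto.
  - destruct (list_remove F (fun x => ~ C x) l) as [l' [H1 H2]].
    { intros U [<-|HU]; auto. }
    exists l'; split; auto.
    intros x [Kx Cx]. destruct (H2 x (Hl2 x Kx)); tauto.
Qed.

Lemma compact_closed_subset K A : compact X K -> is_closed X A -> subset X A K -> compact X A.
Proof.
  intros HK HA Hs. apply (compact_ext (fun x => K x /\ A x)).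
  intros x; split; [tauto| intros; split; auto].
  apply compact_closed_inter; auto.
Qed.

Lemma compact_union K1 K2 : compact X K1 -> compact X K2 -> compact X (fun x => K1 x \/ K2 x).
Proof.
  intros H1 H2 F HF Hcov.
  destruct (H1 F HF) as [l1 [A1 B1]]. intros x Hx; apply Hcov; auto.
  destruct (H2 F HF) as [l2 [A2 B2]]. intros x Hx; apply Hcov; auto.
  exists (l1 ++ l2); split.
  - intros U HU; apply in_app_or in HU; destruct HU; auto.
  - intros x [Hx|Hx]; [destruct (B1 x Hx) as [U [? ?]]|destruct (B2 x Hx) as [U [? ?]]];
      exists U; split; auto; apply in_or_app; auto.
Qed.

Lemma compact_empty : compact X (fun _ => False).
Proof. intros F _ _; exists nil; split; [intros U []| intros x []]. Qed.

Lemma closed_empty : is_closed X (fun _ => False).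
Proof. unfold is_closed. eapply open_ext; [|apply open_full]. intros; tauto. Qed.

Lemma closed_full : is_closed X (fun _ => True).
Proof. unfold is_closed. eapply open_ext; [|apply open_empty]. intros; tauto. Qed.

Lemma list_inter (P : (X -> Prop) -> (X -> Prop) -> Prop) (K : X -> Prop) (l : list (X -> Prop)) :
  (forall W, In W l -> exists U, is_open X U /\ subset X K U /\ P U W) ->
  exists V, is_open X V /\ subset X K V /\
    forall W, In W l -> exists U, subset X V U /\ P U W.
Proof.
  induction l as [|W l IH]; intros H.
  - exists (fun _ => True); split; [apply open_full|split; [intros x _; auto| intros W []]].
  - destruct IH as [V [HV1 [HV2 HV3]]]. { intros; apply H; simpl; auto. }
    destruct (H W) as [U [HU1 [HU2 HU3]]]; [simpl; auto|].
    exists (fun x => V x /\ U x); split; [apply open_inter; auto|split].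
    + intros x Hx; split; auto.
    + intros W' [<-|HW']. * exists U; split; auto. intros x [_ ?]; auto.
      * destruct (HV3 W' HW') as [U' [? ?]]; exists U'; split; auto. intros x [? _]; auto.
Qed.

Hypothesis HX : hausdorff X.

Lemma compact_point_sep K p : compact X K -> ~ K p ->
  exists U W, is_open X U /\ is_open X W /\ subset X K U /\ W p /\ (forall z, ~ (U z /\ W z)).
Proof.
  intros HK Hp.
  destruct (HK (fun U => is_open X U /\ exists W, is_open X W /\ W p /\ forall z, ~ (U z /\ W z)))
    as [l [Hl1 Hl2]].
  - intros U [? _]; auto.
  - intros x Hx. assert (x <> p) by (intros ->; auto).
    destruct (HX x p H) as [U [W [? [? [? [? ?]]]]]].
    exists U; split; auto. split; auto. exists W; auto.
  - destruct (list_inter (fun W U => W p /\ forall z, ~ (U z /\ W z)) (fun x => x = p) l) as [W [HW1 [HW2 HW3]]].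
    { intros U HU. destruct (Hl1 U HU) as [_ [W [? [? ?]]]]. exists W; split; auto.
      split; [intros x ->; auto| split; auto]. }
    exists (fun x => exists U, In U l /\ U x), W; split.
    + apply open_union; intros U HU; apply Hl1; auto.
    + split; auto. split; [exact Hl2|split; [apply HW2; auto|]].
      intros z [[U [HU Uz]] Wz]. destruct (HW3 U HU) as [W' [HW' [_ Hd]]]. apply (Hd z); auto.
Qed.

Lemma compact_is_closed K : compact X K -> is_closed X K.
Proof.
  intros HK. unfold is_closed. apply open_local. intros p Hp.
  destruct (compact_point_sep K p HK Hp) as [U [W [? [? [? [? Hd]]]]]].
  exists W; split; auto; split; auto. intros z Wz Kz. apply (Hd z); auto.
Qed.

End Topo.

Section Cont.
Variable X : TopSpace.

Lemma R_open_lt b : R_open (fun y => y < b).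
Proof. intros y Hy. exists (b - y); split; [lra|]. intros z Hz. apply Rabs_def2 in Hz. lra. Qed.
Lemma R_open_gt a : R_open (fun y => a < y).
Proof. intros y Hy. exists (y - a); split; [lra|]. intros z Hz. apply Rabs_def2 in Hz. lra. Qed.

Lemma cont_lt (f : X -> R) b : continuous X f -> is_open X (fun x => f x < b).
Proof. intros H; apply (H (fun y => y < b)), R_open_lt. Qed.
Lemma cont_gt (f : X -> R) a : continuous X f -> is_open X (fun x => a < f x).
Proof. intros H; apply (H (fun y => a < y)), R_open_gt. Qed.

Lemma cont_halfspaces (f : X -> R) :
  (forall a, is_open X (fun x => a < f x)) -> (forall b, is_open X (fun x => f x < b)) -> continuous X f.
Proof.
  intros Ha Hb V HV. apply open_local. intros x Hx.
  destruct (HV (f x) Hx) as [e [He HVe]].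
  exists (fun y => f x - e < f y /\ f y < f x + e); split; [apply open_inter; auto|split].
  - lra.
  - intros y [H1 H2]. apply HVe. apply Rabs_def1; lra.
Qed.

Lemma cont_pt_eps (phi : R -> R) y : continuity_pt phi y ->
  forall e, 0 < e -> exists d, 0 < d /\ forall z, Rabs (z - y) < d -> Rabs (phi z - phi y) < e.
Proof.
  intros H e He. unfold continuity_pt, continue_in, limit1_in, limit_in in H.
  destruct (H e He) as [d [Hd Hz]]. exists d; split; auto.
  intros z Hzy. destruct (Req_dec z y) as [->|Hne].
  - rewrite Rminus_diag, Rabs_R0; auto.
  - apply (Hz z). split. split; [exact I| intros E; apply Hne; auto]. simpl. unfold R_dist. auto.
Qed.

Lemma cont_comp (phi : R -> R) (f : X -> R) : continuity phi -> continuous X f ->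
  continuous X (fun x => phi (f x)).
Proof.
  intros Hphi Hf V HV. apply (Hf (fun y => V (phi y))).
  intros y Hy. destruct (HV (phi y) Hy) as [e [He HVe]].
  destruct (cont_pt_eps phi y (Hphi y) e He) as [d [Hd Hdd]].
  exists d; split; auto.
Qed.

Lemma cont_const c : continuous X (fun _ => c).
Proof.
  intros V HV. destruct (classic (V c)).
  - eapply open_ext; [|apply open_full]. intros; simpl; tauto.
  - eapply open_ext; [|apply open_empty]. intros; simpl; tauto.
Qed.

Lemma cont_plus (f g : X -> R) : continuous X f -> continuous X g -> continuous X (fun x => f x + g x).
Proof.
  intros Hf Hg. apply cont_halfspaces.
  - intros a. apply (open_Union X (fun U => exists q, U = fun x => q < f x /\ a - q < g x)).
    + intros U [q ->]. apply open_inter; [apply cont_gt|apply cont_gt]; auto.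
    + intros x; split.
      * intros H. exists (fun y => f x - (f x + g x - a)/2 < f y /\ a - (f x - (f x + g x - a)/2) < g y).
        split; [eexists; reflexivity| simpl; lra].
      * intros [U [[q ->] [H1 H2]]]. lra.
  - intros b. apply (open_Union X (fun U => exists q, U = fun x => f x < q /\ g x < b - q)).
    + intros U [q ->]. apply open_inter; [apply cont_lt|apply cont_lt]; auto.
    + intros x; split.
      * intros H. exists (fun y => f y < f x + (b - f x - g x)/2 /\ g y < b - (f x + (b - f x - g x)/2)).
        split; [eexists; reflexivity| simpl; lra].
      * intros [U [[q ->] [H1 H2]]]. lra.
Qed.

Lemma cont_min (f g : X -> R) : continuous X f -> continuous X g -> continuous X (fun x => Rmin (f x) (g x)).
Proof.
  intros Hf Hg. apply cont_halfspaces.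
  - intros a. apply (open_ext X (fun x => a < f x /\ a < g x)).
    + intros x. unfold Rmin. destruct (Rle_dec (f x) (g x)); split; intros; lra.
    + apply open_inter; apply cont_gt; auto.
  - intros b. apply (open_ext X (fun x => f x < b \/ g x < b)).
    + intros x. unfold Rmin. destruct (Rle_dec (f x) (g x)); split; intros; lra.
    + apply open_or; apply cont_lt; auto.
Qed.

Lemma supp_sub (f g : X -> R) : (forall x, f x = 0 -> g x = 0) -> subset X (support X g) (support X f).
Proof.
  intros H. apply closure_mono. intros x Hx Hf. apply Hx, H, Hf.
Qed.

Lemma support_closed f : is_closed X (support X f).
Proof. apply closure_closed. Qed.

Lemma Cc_of (f g h : X -> R) : Cc X f -> Cc X g -> continuous X h ->
  (forall x, f x = 0 -> g x = 0 -> h x = 0) -> Cc X h.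
Proof.
  intros [Hf1 Hf2] [Hg1 Hg2] Hh H. split; auto.
  apply (compact_closed_subset X (fun x => support X f x \/ support X g x)).
  - apply compact_union; auto.
  - apply closure_closed.
  - apply closure_min. apply closed_or; apply closure_closed.
    intros x Hx. destruct (classic (f x = 0)) as [E1|E1]; [destruct (classic (g x = 0)) as [E2|E2]|].
    + exfalso; apply Hx, H; auto.
    + right; apply closure_incl; auto.
    + left; apply closure_incl; auto.
Qed.

Lemma Cc_of1 (f h : X -> R) : Cc X f -> continuous X h -> (forall x, f x = 0 -> h x = 0) -> Cc X h.
Proof. intros Hf Hh H. apply (Cc_of f f h); auto. Qed.

Lemma Cc_zero : Cc X (fun _ => 0).
Proof.
  split; [apply cont_const|].
  apply (compact_ext X (fun _ => False)); [|apply compact_empty].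
  intros x; split; [tauto|]. intros Hx. apply (Hx (fun _ => False)); [apply closed_empty|].
  intros y Hy; apply Hy; auto.
Qed.

Lemma Cc_comp (phi : R -> R) f : continuity phi -> phi 0 = 0 -> Cc X f -> Cc X (fun x => phi (f x)).
Proof.
  intros H0 H1 Hf. apply (Cc_of1 f); auto. apply cont_comp; auto; apply Hf.
  intros x ->; auto.
Qed.

Lemma Cc_plus f g : Cc X f -> Cc X g -> Cc X (fun x => f x + g x).
Proof.
  intros Hf Hg. apply (Cc_of f g); auto. apply cont_plus; [apply Hf|apply Hg].
  intros x -> ->; lra.
Qed.

Lemma Cc_min f g : Cc X f -> Cc X g -> Cc X (fun x => Rmin (f x) (g x)).
Proof.
  intros Hf Hg. apply (Cc_of f g); auto. apply cont_min; [apply Hf|apply Hg].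
  intros x -> ->. unfold Rmin; destruct Rle_dec; lra.
Qed.

Hypothesis HX : hausdorff X.
Hypothesis HLC : locally_compact X.

Lemma list_closure_union (l : list (X -> Prop)) :
  (forall U, In U l -> compact X (closure X U)) ->
  compact X (fun x => exists U, In U l /\ closure X U x) /\
  is_closed X (fun x => exists U, In U l /\ closure X U x).
Proof.
  induction l as [|V l IH]; intros H.
  - split.
    + eapply compact_ext; [|apply compact_empty]. intros x; split; [tauto|intros [U [[] _]]].
    + eapply closed_ext; [|apply closed_empty]. intros x; split; [tauto|intros [U [[] _]]].
  - destruct IH as [IH1 IH2]; [intros; apply H; simpl; auto|].
    assert (E : forall x, (closure X V x \/ exists U, In U l /\ closure X U x) <->
                      (exists U, In U (V :: l) /\ closure X U x)).
    { intros x; split.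
      - intros [Hx|[U [HU Hx]]]; [exists V|exists U]; simpl; auto.
      - intros [U [[<-|HU] Hx]]; [left; auto|right; exists U; auto]. }
    split.
    + eapply compact_ext; [exact E|]. apply compact_union; auto. apply H; simpl; auto.
    + eapply closed_ext; [exact E|]. apply closed_or; auto. apply closure_closed.
Qed.

Lemma lc_nbhd K : compact X K -> exists G, is_open X G /\ subset X K G /\ compact X (closure X G).
Proof.
  intros HK.
  destruct (HK (fun U => is_open X U /\ compact X (closure X U))) as [l [Hl1 Hl2]].
  - intros U [? _]; auto.
  - intros x _. destruct (HLC x) as [U [? [? ?]]]. exists U; auto.
  - exists (fun x => exists U, In U l /\ U x); split; [apply open_union; intros; apply Hl1; auto|split; auto].
    destruct (list_closure_union l) as [H1 H2]; [intros; apply Hl1; auto|].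
    apply (compact_closed_subset X _ _ H1); [apply closure_closed|].
    apply closure_min; auto. intros x [U [HU Hx]]. exists U; split; auto. apply closure_incl; auto.
Qed.

Lemma shrink K U : compact X K -> is_open X U -> subset X K U ->
  exists V, is_open X V /\ subset X K V /\ compact X (closure X V) /\ subset X (closure X V) U.
Proof.
  intros HK HU HKU.
  destruct (lc_nbhd K HK) as [G [HG1 [HG2 HG3]]].
  assert (HC : compact X (fun x => closure X G x /\ ~ U x)).
  { apply compact_closed_inter; auto. apply closed_compl_open; auto. }
  destruct (HC (fun W => is_open X W /\ exists U', is_open X U' /\ subset X K U' /\ forall z, ~ (U' z /\ W z)))
    as [l [Hl1 Hl2]].
  - intros W [? _]; auto.
  - intros p [_ Hp]. assert (~ K p) by (intros Kp; apply Hp, HKU; auto).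
    destruct (compact_point_sep X HX K p HK H) as [U' [W [? [? [? [? ?]]]]]].
    exists W; split; auto. split; auto. exists U'; auto.
  - destruct (list_inter X (fun U' W => forall z, ~ (U' z /\ W z)) K l) as [V' [HV1 [HV2 HV3]]].
    { intros W HW. destruct (Hl1 W HW) as [_ [U' [? [? ?]]]]. exists U'; auto. }
    assert (Hcl : subset X (closure X (fun x => G x /\ V' x)) (closure X G)).
    { apply closure_mono. intros x [? ?]; auto. }
    exists (fun x => G x /\ V' x); split; [apply open_inter; auto|split; [intros x Hx; split; auto|split]].
    + apply (compact_closed_subset X _ _ HG3); auto. apply closure_closed.
    + intros z Hz. apply NNPP; intros Hnu.
      destruct (Hl2 z (conj (Hcl z Hz) Hnu)) as [W [HW Wz]].
      destruct (HV3 W HW) as [U' [HU' Hd]].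
      assert (Hs : subset X (closure X (fun x => G x /\ V' x)) (fun x => ~ W x)).
      { apply closure_min. apply closed_compl_open. apply Hl1; auto.
        intros x [_ Hx] Wx. apply (Hd x); split; auto. }
      apply (Hs z Hz Wz).
Qed.

End Cont.

Lemma Rsup_lub (S : R -> Prop) : (exists y, S y) -> (exists M, forall y, S y -> y <= M) -> is_lub S (Rsup S).
Proof.
  intros H1 [M HM]. unfold Rsup. apply epsilon_spec.
  destruct (completeness S) as [m Hm]; [exists M; exact HM| exact H1|]. exists m; exact Hm.
Qed.

Lemma Rinf_glb (S : R -> Prop) : (exists y, S y) -> (exists m, forall y, S y -> m <= y) ->
  (forall y, S y -> Rinf S <= y) /\ (forall b, (forall y, S y -> b <= y) -> b <= Rinf S).
Proof.
  intros [y0 H0] [m Hm].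
  destruct (Rsup_lub (fun y => S (- y))) as [A B].
  - exists (- y0). rewrite Ropp_involutive; auto.
  - exists (- m). intros y Hy. apply Hm in Hy. lra.
  - unfold Rinf. split.
    + intros y Hy. assert (- y <= Rsup (fun y => S (- y))); [|lra].
      apply A. rewrite Ropp_involutive; auto.
    + intros b Hb. assert (Rsup (fun y => S (- y)) <= - b); [|lra].
      apply B. intros y Hy. apply Hb in Hy. lra.
Qed.

Lemma pow2_ge n : INR n <= 2 ^ n.
Proof.
  induction n. simpl; lra. rewrite S_INR. simpl.
  assert (1 <= 2 ^ n) by (apply pow_R1_Rle; lra). lra.
Qed.

Lemma pow2_pos n : 0 < 2 ^ n.
Proof. apply pow_lt; lra. Qed.

Lemma small_dyadic e : 0 < e -> exists n, 2 / 2 ^ n < e.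
Proof.
  intros He. destruct (archimed (2 / e)) as [H1 H2].
  assert (Hz : (0 <= up (2 / e))%Z).
  { apply le_IZR. assert (0 < 2 / e) by (apply Rdiv_lt_0_compat; lra). lra. }
  exists (Z.to_nat (up (2 / e))).
  assert (E : INR (Z.to_nat (up (2 / e))) = IZR (up (2/e))).
  { rewrite INR_IZR_INZ, Z2Nat.id; auto. }
  pose proof (pow2_ge (Z.to_nat (up (2 / e)))) as Hp. rewrite E in Hp.
  pose proof (pow2_pos (Z.to_nat (up (2 / e)))) as Hq.
  apply (Rmult_lt_reg_r (2 ^ Z.to_nat (up (2 / e)))); auto.
  unfold Rdiv. rewrite Rmult_assoc, Rinv_l; [|lra].
  assert (2 < e * (2/e) + e * (IZR (up (2 / e)) - 2/e)).
  { assert (e * (2 / e) = 2) by (field; lra).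
    assert (0 < e * (IZR (up (2 / e)) - 2 / e)) by (apply Rmult_lt_0_compat; lra). lra. }
  assert (e * (2/e) + e * (IZR (up (2 / e)) - 2/e) <= e * 2 ^ Z.to_nat (up (2 / e))).
  { rewrite <- Rmult_plus_distr_l. apply Rmult_le_compat_l; lra. }
  lra.
Qed.

Section Ury.
Variable X : TopSpace.
Hypothesis HX : hausdorff X.
Hypothesis HLC : locally_compact X.

Definition mid (A B : X -> Prop) : X -> Prop :=
  epsilon (inhabits A) (fun C => is_open X C /\ subset X (closure X A) C /\ subset X (closure X C) B).

Lemma mid_spec A B : is_open X B -> compact X (closure X A) -> subset X (closure X A) B ->
  is_open X (mid A B) /\ subset X (closure X A) (mid A B) /\ subset X (closure X (mid A B)) B.
Proof.
  intros H1 H2 H3. unfold mid. apply epsilon_spec.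
  destruct (shrink X HX HLC (closure X A) B H2 H1 H3) as [V [? [? [? ?]]]].
  exists V; auto.
Qed.

Variables V0 V1 : X -> Prop.
Hypothesis HV0 : is_open X V0.
Hypothesis HV1 : is_open X V1.
Hypothesis HV01 : subset X (closure X V0) V1.
Hypothesis HV1c : compact X (closure X V1).

Fixpoint lev (n : nat) (j : nat) : X -> Prop :=
  match n with
  | O => if Nat.eqb j 0 then V0 else V1
  | S n => if Nat.even j then lev n (Nat.div2 j) else mid (lev n (Nat.div2 j)) (lev n (S (Nat.div2 j)))
  end.

Lemma lev_S n j : lev (S n) j = if Nat.even j then lev n (Nat.div2 j) else mid (lev n (Nat.div2 j)) (lev n (S (Nat.div2 j))).
Proof. reflexivity. Qed.

Lemma lev_even n i : lev (S n) (2 * i) = lev n i.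
Proof. rewrite lev_S. rewrite Nat.even_even, Nat.div2_double. reflexivity. Qed.

Lemma lev_odd n i : lev (S n) (2 * i + 1) = mid (lev n i) (lev n (S i)).
Proof.
  rewrite lev_S. rewrite Nat.even_odd. rewrite Nat.add_1_r, Nat.div2_succ_double. reflexivity.
Qed.

Definition Inv n := (forall j, (j <= 2 ^ n)%nat -> is_open X (lev n j) /\ subset X (lev n j) V1) /\
  (forall j, (j < 2 ^ n)%nat -> subset X (closure X (lev n j)) (lev n (S j))).

Lemma compact_in_V1 A : subset X A V1 -> compact X (closure X A).
Proof.
  intros H. apply (compact_closed_subset X _ _ HV1c); [apply closure_closed|].
  apply closure_mono; auto.
Qed.

Lemma Inv_all n : Inv n.
Proof.
  induction n as [|n [IH1 IH2]].
  - split.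
    + intros j Hj. simpl in Hj. destruct j as [|[|j]]; simpl; [|split; auto; intros x Hx; auto|lia].
      split; auto. intros x Hx; apply HV01, closure_incl; auto.
    + intros j Hj. simpl in Hj. assert (j = 0%nat) by lia. subst. simpl. auto.
  - assert (Hmid : forall i, (i < 2 ^ n)%nat ->
      is_open X (mid (lev n i) (lev n (S i))) /\ subset X (closure X (lev n i)) (mid (lev n i) (lev n (S i)))
      /\ subset X (closure X (mid (lev n i) (lev n (S i)))) (lev n (S i))).
    { intros i Hi. apply mid_spec.
      - apply IH1; lia.
      - apply compact_in_V1, IH1; lia.
      - apply IH2; auto. }
    assert (P2n : (2 ^ S n = 2 * 2 ^ n)%nat) by (simpl; lia).
    split.
    + intros j Hj. destruct (Nat.Even_or_Odd j) as [[i ->]|[i ->]].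
      * rewrite lev_even. apply IH1. lia.
      * rewrite lev_odd. destruct (Hmid i) as [A [B C]]; [lia|]. split; auto.
        intros x Hx. apply (IH1 (S i)); [lia|]. apply C, closure_incl; auto.
    + intros j Hj. destruct (Nat.Even_or_Odd j) as [[i ->]|[i ->]].
      * rewrite lev_even. replace (S (2 * i)) with (2 * i + 1)%nat by lia. rewrite lev_odd.
        apply Hmid. lia.
      * rewrite lev_odd. replace (S (2 * i + 1)) with (2 * S i)%nat by lia. rewrite lev_even.
        apply Hmid. lia.
Qed.

Lemma lev_cons k n j : lev (k + n) (j * 2 ^ k) = lev n j.
Proof.
  induction k. - simpl. rewrite Nat.mul_1_r. auto.
  - replace (S k + n)%nat with (S (k + n)) by lia.
    replace (j * 2 ^ S k)%nat with (2 * (j * 2 ^ k))%nat by (simpl; lia).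
    rewrite lev_even; auto.
Qed.

Lemma lev_mono n j d : (j + d <= 2 ^ n)%nat -> subset X (lev n j) (lev n (j + d)).
Proof.
  induction d; intros H. - rewrite Nat.add_0_r; intros x Hx; auto.
  - intros x Hx. replace (j + S d)%nat with (S (j + d)) by lia.
    apply (proj2 (Inv_all n)); [lia|]. apply closure_incl, IHd; auto. lia.
Qed.

Lemma lev_strict n j j' : (j < j')%nat -> (j' <= 2 ^ n)%nat -> subset X (closure X (lev n j)) (lev n j').
Proof.
  intros H1 H2 x Hx. replace j' with (S j + (j' - S j))%nat by lia. apply lev_mono; [lia|].
  apply (proj2 (Inv_all n)); auto. lia.
Qed.

Lemma lev_order m i n j : (i <= 2 ^ m)%nat -> (j <= 2 ^ n)%nat -> INR i / 2 ^ m < INR j / 2 ^ n ->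
  subset X (closure X (lev m i)) (lev n j).
Proof.
  intros Hi Hj Hlt.
  rewrite <- (lev_cons n m i). rewrite <- (lev_cons m n j). rewrite (Nat.add_comm m n).
  apply lev_strict.
  - apply INR_lt. rewrite !mult_INR, !pow_INR. simpl INR.
    pose proof (pow2_pos m). pose proof (pow2_pos n).
    unfold Rdiv in Hlt. apply (Rmult_lt_compat_r (2^m * 2^n)) in Hlt; [|apply Rmult_lt_0_compat; auto].
    replace (INR i * / 2 ^ m * (2 ^ m * 2 ^ n)) with (INR i * 2 ^ n) in Hlt by (field; lra).
    replace (INR j * / 2 ^ n * (2 ^ m * 2 ^ n)) with (INR j * 2 ^ m) in Hlt by (field; lra).
    replace (1 + 1) with 2 by lra. auto.
  - rewrite Nat.pow_add_r. apply Nat.mul_le_mono_r. auto.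
Qed.

Definition Dset (x : X) : R -> Prop :=
  fun r => r = 1 \/ exists n j, (j <= 2 ^ n)%nat /\ lev n j x /\ r = INR j / 2 ^ n.

Definition gfun (x : X) : R := Rinf (Dset x).

Lemma Dset_ge0 x r : Dset x r -> 0 <= r.
Proof.
  intros [->|[n [j [_ [_ ->]]]]]; [lra|].
  apply Rmult_le_pos; [apply pos_INR| left; apply Rinv_0_lt_compat, pow2_pos].
Qed.

Lemma g_glb x : (forall y, Dset x y -> gfun x <= y) /\ (forall b, (forall y, Dset x y -> b <= y) -> b <= gfun x).
Proof. apply Rinf_glb. exists 1; left; auto. exists 0; apply Dset_ge0. Qed.

Lemma g_range x : 0 <= gfun x <= 1.
Proof.
  destruct (g_glb x) as [A B]. split.
  - apply B, Dset_ge0.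
  - apply A; left; auto.
Qed.

Lemma g_V0 x : V0 x -> gfun x = 0.
Proof.
  intros Hx. destruct (g_range x). destruct (g_glb x) as [A _].
  assert (gfun x <= 0); [|lra]. apply A. right. exists 0%nat, 0%nat. simpl. split; [lia|split; auto]. lra.
Qed.

Lemma g_out x : ~ V1 x -> gfun x = 1.
Proof.
  intros Hx. destruct (g_range x). destruct (g_glb x) as [_ B].
  assert (1 <= gfun x); [|lra]. apply B.
  intros y [->|[n [j [Hj [Hl _]]]]]; [lra|]. exfalso. apply Hx. apply (proj1 (Inv_all n) j Hj); auto.
Qed.

Lemma g_lt_open r : is_open X (fun x => gfun x < r).
Proof.
  destruct (Rlt_dec 1 r) as [Hr0|Hr0].
  - eapply open_ext; [|apply open_full]. intros x; pose proof (g_range x); split; intros; auto; lra.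
  - apply (open_Union X (fun U => exists n j, (j <= 2 ^ n)%nat /\ INR j / 2 ^ n < r /\ U = lev n j)).
    + intros U [n [j [Hj [_ ->]]]]. apply (proj1 (Inv_all n) j Hj).
    + intros x; split.
      * intros Hx. destruct (g_glb x) as [_ B].
        destruct (classic (exists y, Dset x y /\ y < r)) as [[y [[->|[n [j [Hj [Hl ->]]]]] Hy]]|Hn].
        -- lra.
        -- exists (lev n j); split; auto. exists n, j; auto.
        -- exfalso. assert (r <= gfun x); [|lra]. apply B. intros y Hy.
           apply Rnot_lt_le. intros Hlt. apply Hn; eauto.
      * intros [U [[n [j [Hj [Hr ->]]]] Hx]]. destruct (g_glb x) as [A _].
        assert (gfun x <= INR j / 2 ^ n); [|lra]. apply A. right. exists n, j; auto.
Qed.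

Lemma g_gt_open r : is_open X (fun x => r < gfun x).
Proof.
  destruct (Rlt_dec r 0) as [Hr|Hr].
  - eapply open_ext; [|apply open_full]. intros x; pose proof (g_range x); split; intros; auto; lra.
  - destruct (Rle_dec 1 r) as [Hr1|Hr1].
    { eapply open_ext; [|apply open_empty]. intros x; pose proof (g_range x); split; intros; auto; lra. }
    apply (open_Union X (fun U => exists n j, (j < 2 ^ n)%nat /\ r < INR j / 2 ^ n /\
                                    U = fun x => ~ closure X (lev n j) x)).
    + intros U [n [j [Hj [_ ->]]]]. apply closure_closed.
    + intros x; split.
      * intros Hx.
        destruct (small_dyadic (gfun x - r)) as [n Hn]; [lra|].
        pose proof (pow2_pos n) as Hp.
        destruct (archimed (r * 2 ^ n)) as [A1 A2].
        assert (Hz : (0 <= up (r * 2 ^ n))%Z).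
        { apply le_IZR. assert (0 <= r * 2 ^ n) by (apply Rmult_le_pos; lra). lra. }
        set (j := Z.to_nat (up (r * 2 ^ n))).
        assert (Ej : INR j = IZR (up (r * 2 ^ n))) by (unfold j; rewrite INR_IZR_INZ, Z2Nat.id; auto).
        assert (Hj1 : r < INR j / 2 ^ n).
        { apply (Rmult_lt_reg_r (2 ^ n)); auto. unfold Rdiv. rewrite Rmult_assoc, Rinv_l; lra. }
        assert (Hj2 : INR (S j) / 2 ^ n < gfun x).
        { rewrite S_INR. assert (2 / 2 ^ n * 2 ^ n = 2) by (field; lra).
          assert ((INR j + 1) / 2 ^ n = (INR j + 1) * / 2 ^ n) by reflexivity.
          assert (INR j + 1 <= r * 2 ^ n + 2) by lra.
          apply (Rmult_lt_reg_r (2 ^ n)); auto. unfold Rdiv. rewrite Rmult_assoc, Rinv_l; [|lra].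
          assert ((gfun x - r) * 2 ^ n > 2 / 2 ^ n * 2 ^ n) by (apply Rmult_lt_compat_r; lra).
          nra. }
        assert (HjS : (S j <= 2 ^ n)%nat).
        { pose proof (g_range x).
          assert (H3 : INR (S j) / 2 ^ n <= 1) by lra.
          apply (Rmult_le_compat_r (2 ^ n)) in H3; [|lra].
          unfold Rdiv in H3. rewrite Rmult_assoc, Rinv_l in H3; [|lra].
          apply INR_le. rewrite pow_INR. replace (INR 2) with 2 by (simpl; lra). lra. }
        exists (fun x => ~ closure X (lev n j) x). split.
        -- exists n, j. split; [lia|split; auto].
        -- intros Hc. destruct (g_glb x) as [A _].
           assert (gfun x <= INR (S j) / 2 ^ n); [|lra]. apply A. right. exists n, (S j).
           split; auto. split; auto. apply (proj2 (Inv_all n) j); [lia|auto].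
      * intros [U [[n [j [Hj [Hr' ->]]]] Hx]]. destruct (g_glb x) as [_ B].
        assert (INR j / 2 ^ n <= gfun x); [|lra]. apply B.
        intros y [->|[m [i [Hi [Hl ->]]]]].
        -- pose proof (pow2_pos n). apply (Rmult_le_reg_r (2 ^ n)); auto. unfold Rdiv.
           rewrite Rmult_assoc, Rinv_l; [|lra]. rewrite Rmult_1_r, Rmult_1_l.
           left. replace (2 ^ n) with (INR (2 ^ n)) by (rewrite pow_INR; simpl; f_equal; lra).
           apply lt_INR. auto.
        -- apply Rnot_lt_le. intros Hlt. apply Hx.
           apply closure_incl. apply (lev_order m i n j Hi); [lia|auto|apply closure_incl; auto].
Qed.

Lemma g_cont : continuous X gfun.
Proof. apply cont_halfspaces; [apply g_gt_open|apply g_lt_open]. Qed.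

End Ury.

Lemma urysohn (X : TopSpace) : hausdorff X -> locally_compact X ->
  forall K U, compact X K -> is_open X U -> subset X K U ->
  exists u, Cc X u /\ (forall x, 0 <= u x <= 1) /\ (forall x, K x -> u x = 1) /\ subset X (support X u) U.
Proof.
  intros HX HLC K U HK HU HKU.
  destruct (shrink X HX HLC K U HK HU HKU) as [V1 [HV1 [HKV1 [HV1c HV1U]]]].
  destruct (shrink X HX HLC K V1 HK HV1 HKV1) as [V0 [HV0 [HKV0 [HV0c HV01]]]].
  set (g := gfun X V0 V1).
  assert (Hsupp : subset X (support X (fun x => 1 - g x)) (closure X V1)).
  { apply closure_min; [apply closure_closed|]. intros x Hx. apply closure_incl.
    apply NNPP; intros Hn. apply Hx. unfold g; rewrite (g_out X HX HLC V0 V1 HV0 HV1 HV01 HV1c x Hn); lra. }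
  exists (fun x => 1 - g x). split; [split|split; [|split]].
  - apply cont_comp; [reg|]. apply (g_cont X HX HLC V0 V1 HV0 HV1 HV01 HV1c).
  - apply (compact_closed_subset X _ _ HV1c); auto. apply closure_closed.
  - intros x. pose proof (g_range X V0 V1 x). unfold g. lra.
  - intros x Kx. unfold g. rewrite g_V0; auto. lra.
  - intros x Hx. apply HV1U, Hsupp; auto.
Qed.

Definition pos (s : R) : R := (s + Rabs s) / 2.
Lemma pos_cont : continuity pos. Proof. unfold pos; reg. Qed.
Lemma pos_ge0 s : 0 <= pos s. Proof. unfold pos, Rabs; destruct Rcase_abs; lra. Qed.
Lemma pos_id s : 0 <= s -> pos s = s. Proof. unfold pos, Rabs; destruct Rcase_abs; lra. Qed.
Lemma pos_0 s : s <= 0 -> pos s = 0. Proof. unfold pos, Rabs; destruct Rcase_abs; lra. Qed.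
Lemma pos_ge s : s <= pos s. Proof. unfold pos, Rabs; destruct Rcase_abs; lra. Qed.

Lemma cont_idR : continuity (fun s : R => s). Proof. reg. Qed.

Lemma ind_in (X : TopSpace) (A : X -> Prop) x : A x -> indicator X A x = 1.
Proof. unfold indicator; destruct excluded_middle_informative; tauto. Qed.
Lemma ind_out (X : TopSpace) (A : X -> Prop) x : ~ A x -> indicator X A x = 0.
Proof. unfold indicator; destruct excluded_middle_informative; tauto. Qed.
Lemma ind_range (X : TopSpace) (A : X -> Prop) x : 0 <= indicator X A x <= 1.
Proof. unfold indicator; destruct excluded_middle_informative; lra. Qed.

Ltac indc A x := let H := fresh "Hi" in destruct (classic (A x)) as [H|H];
  [rewrite (ind_in _ A x H)|rewrite (ind_out _ A x H)].

Lemma pos_lip s t : 0 <= t -> Rabs (pos s - pos (s - t)) <= t.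
Proof.
  intros Ht. apply Rabs_le.
  destruct (Rle_dec s 0).
  - rewrite (pos_0 s), (pos_0 (s - t)); lra.
  - destruct (Rle_dec (s - t) 0).
    + rewrite (pos_id s), (pos_0 (s - t)); lra.
    + rewrite (pos_id s), (pos_id (s - t)); lra.
Qed.

Lemma pos_le s c : s <= c -> 0 <= c -> pos s <= c.
Proof. intros. destruct (Rle_dec s 0); [rewrite pos_0|rewrite pos_id]; lra. Qed.

Lemma approx_le x y N : 0 <= N -> (forall t, 0 < t -> x <= y + N * t) -> x <= y.
Proof.
  intros HN H. apply Rnot_lt_le; intros Hlt.
  set (t := (x - y) / (N + 1)).
  assert (Ht : 0 < t) by (apply Rdiv_lt_0_compat; lra).
  specialize (H t Ht).
  assert (N * t < x - y).
  { unfold t. apply (Rmult_lt_reg_r (N + 1)); [lra|].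
    replace (N * ((x - y) / (N + 1)) * (N + 1)) with (N * (x - y)) by (field; lra). nra. }
  lra.
Qed.


Section Meas.
Variable X : TopSpace.
Variable zeta : (X -> R) -> R.
Hypothesis HX : hausdorff X.
Hypothesis HLC : locally_compact X.
Hypothesis HQ : quasi_integral X zeta.

Lemma Zmono f g : Cc X f -> Cc X g -> (forall x, f x <= g x) -> zeta f <= zeta g.
Proof. apply (proj1 HQ). Qed.

Lemma Zext f g : (forall x, f x = g x) -> zeta f = zeta g.
Proof. intros H. f_equal. apply functional_extensionality; auto. Qed.

Lemma Zlin f phi psi a b : Cc X f -> continuity phi -> phi 0 = 0 -> continuity psi -> psi 0 = 0 ->
  zeta (fun x => a * phi (f x) + b * psi (f x)) = a * zeta (fun x => phi (f x)) + b * zeta (fun x => psi (f x)).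
Proof. intros; apply (proj2 (proj2 HQ)); auto. Qed.

Lemma Z0 : zeta (fun _ => 0) = 0.
Proof.
  pose proof (Zlin (fun _ => 0) (fun s => s) (fun s => s) 0 0 (Cc_zero X) cont_idR eq_refl cont_idR eq_refl) as E.
  cbv beta in E. rewrite (Zext (fun x => 0 * 0 + 0 * 0) (fun _ => 0)) in E by (intros; lra). lra.
Qed.

Lemma Zhom f a : Cc X f -> zeta (fun x => a * f x) = a * zeta f.
Proof.
  intros Hf.
  pose proof (Zlin f (fun s => s) (fun s => s) a 0 Hf cont_idR eq_refl cont_idR eq_refl) as E.
  cbv beta in E. rewrite (Zext (fun x => a * f x + 0 * f x) (fun x => a * f x)) in E by (intros; lra).
  rewrite E. replace (zeta (fun x => f x)) with (zeta f) by reflexivity. lra.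
Qed.

Lemma Zadd f phi psi : Cc X f -> continuity phi -> phi 0 = 0 -> continuity psi -> psi 0 = 0 ->
  zeta (fun x => phi (f x) + psi (f x)) = zeta (fun x => phi (f x)) + zeta (fun x => psi (f x)).
Proof.
  intros. pose proof (Zlin f phi psi 1 1) as E. cbv beta in E.
  rewrite (Zext (fun x => 1 * phi (f x) + 1 * psi (f x)) (fun x => phi (f x) + psi (f x))) in E by (intros; lra).
  rewrite E; auto. lra.
Qed.

Lemma Znonneg f : Cc X f -> (forall x, 0 <= f x) -> 0 <= zeta f.
Proof. intros Hf H. rewrite <- Z0. apply Zmono; auto. apply Cc_zero. Qed.

Lemma Zdisj p1 p2 : Cc X p1 -> Cc X p2 -> (forall x, 0 <= p1 x) -> (forall x, 0 <= p2 x) ->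
  (forall x, p1 x = 0 \/ p2 x = 0) -> zeta (fun x => p1 x + p2 x) = zeta p1 + zeta p2.
Proof.
  intros H1 H2 P1 P2 D.
  set (h := fun x => p1 x + - p2 x).
  assert (Hh : Cc X h).
  { apply (Cc_of X p1 p2); auto. apply cont_plus; [apply H1|]. apply cont_comp; [reg|apply H2].
    intros x E1 E2; unfold h; rewrite E1, E2; lra. }
  assert (E1 : forall x, pos (h x) = p1 x).
  { intros x; unfold h; cbv beta; specialize (P1 x); specialize (P2 x); destruct (D x) as [E|E]; rewrite E.
    - rewrite pos_0; lra.
    - rewrite pos_id; lra. }
  assert (E2 : forall x, pos (- h x) = p2 x).
  { intros x; unfold h; cbv beta; specialize (P1 x); specialize (P2 x); destruct (D x) as [E|E]; rewrite E.
    - rewrite pos_id; lra.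
    - rewrite pos_0; lra. }
  rewrite (Zext _ (fun x => pos (h x) + (fun s => pos (- s)) (h x))).
  - rewrite (Zadd h pos (fun s => pos (- s))); auto.
    + f_equal; apply Zext; auto.
    + apply pos_cont.
    + apply pos_0; lra.
    + apply (continuity_comp (fun s => - s) pos); [reg|apply pos_cont].
    + cbv beta. apply pos_0; lra.
  - intros x. rewrite E1. simpl. rewrite E2. auto.
Qed.

Definition T (A : X -> Prop) : R := tau_of X zeta A.
Definition SK (A : X -> Prop) : R -> Prop :=
  fun r => exists f, Cc X f /\ (forall x, indicator X A x <= f x) /\ r = zeta f.
Definition SO (A : X -> Prop) : R -> Prop :=
  fun r => exists f, Cc X f /\ (forall x, f x <= indicator X A x) /\ r = zeta f.

Lemma T_K A : compact X A -> T A = Rinf (SK A).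
Proof. intros H. unfold T, tau_of. destruct excluded_middle_informative; [reflexivity|contradiction]. Qed.
Lemma T_nK A : ~ compact X A -> T A = Rsup (SO A).
Proof. intros H. unfold T, tau_of. destruct excluded_middle_informative; [contradiction|reflexivity]. Qed.

Lemma SK_glb K : compact X K ->
  (forall y, SK K y -> Rinf (SK K) <= y) /\ (forall b, (forall y, SK K y -> b <= y) -> b <= Rinf (SK K)).
Proof.
  intros HK. apply Rinf_glb.
  - destruct (urysohn X HX HLC K (fun _ => True) HK (open_full X)) as [u [Hu [Hr [H1 _]]]]; [intros x _; auto|].
    exists (zeta u). exists u; split; auto. split; auto.
    intros x. indc K x; [rewrite H1; auto; lra| apply Hr].
  - exists 0. intros y [f [Hf [Hle ->]]]. apply Znonneg; auto.
    intros x; pose proof (ind_range X K x); specialize (Hle x); lra.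
Qed.

Lemma T_K_lower K f : compact X K -> Cc X f -> (forall x, indicator X K x <= f x) -> T K <= zeta f.
Proof. intros HK Hf H. rewrite T_K; auto. apply (SK_glb K HK). exists f; auto. Qed.

Lemma T_K_greatest K b : compact X K ->
  (forall f, Cc X f -> (forall x, indicator X K x <= f x) -> b <= zeta f) -> b <= T K.
Proof.
  intros HK H. rewrite T_K; auto. apply (SK_glb K HK). intros y [f [Hf [Hle ->]]]. auto.
Qed.

Lemma SO_lub O : in_O X O -> is_lub (SO O) (Rsup (SO O)).
Proof.
  intros [HO HOc]. apply Rsup_lub.
  - exists (zeta (fun _ => 0)). exists (fun _ => 0); split; [apply Cc_zero|split; auto].
    intros x; apply ind_range.
  - destruct (urysohn X HX HLC (closure X O) (fun _ => True) HOc (open_full X)) as [u [Hu [Hr [H1 _]]]];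
      [intros x _; auto|].
    exists (zeta u). intros y [f [Hf [Hle ->]]]. apply Zmono; auto.
    intros x. specialize (Hle x). revert Hle. indc O x; intros Hle.
    + rewrite H1; [lra|apply closure_incl; auto].
    + specialize (Hr x); lra.
Qed.

Lemma ind_eq_urysohn O : is_open X O -> compact X O ->
  exists u, Cc X u /\ forall x, u x = indicator X O x.
Proof.
  intros HO HK.
  destruct (urysohn X HX HLC O O HK HO) as [u [Hu [Hr [H1 H2]]]]; [intros x Hx; auto|].
  exists u; split; auto. intros x. indc O x; [auto|].
  apply NNPP; intros Hn. apply Hi, H2, closure_incl; auto.
Qed.

Lemma T_O_upper O f : in_O X O -> Cc X f -> (forall x, f x <= indicator X O x) -> zeta f <= T O.
Proof.
  intros HO Hf H. destruct (classic (compact X O)) as [Hc|Hc].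
  - apply T_K_greatest; auto. intros g Hg Hle. apply Zmono; auto.
    intros x; specialize (H x); specialize (Hle x); lra.
  - rewrite T_nK; auto. apply (SO_lub O HO). exists f; auto.
Qed.

Lemma T_O_least O b : in_O X O ->
  (forall f, Cc X f -> (forall x, f x <= indicator X O x) -> zeta f <= b) -> T O <= b.
Proof.
  intros HO H. destruct (classic (compact X O)) as [Hc|Hc].
  - destruct (ind_eq_urysohn O (proj1 HO) Hc) as [u [Hu Eu]].
    apply Rle_trans with (zeta u).
    + apply T_K_lower; auto. intros x; rewrite Eu; lra.
    + apply H; auto. intros x; rewrite Eu; lra.
  - rewrite T_nK; auto. apply (SO_lub O HO). intros y [f [Hf [Hle ->]]]; auto.
Qed.

Lemma ind_mono (A B : X -> Prop) x : subset X A B -> indicator X A x <= indicator X B x.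
Proof. intros H. indc A x; [rewrite ind_in; auto; lra| apply ind_range]. Qed.

Lemma urysohn_ind K O : compact X K -> is_open X O -> subset X K O ->
  exists u, Cc X u /\ (forall x, 0 <= u x <= 1) /\ (forall x, indicator X K x <= u x) /\
    (forall x, u x <= indicator X O x) /\ (forall x, ~ O x -> u x = 0).
Proof.
  intros HK HO HKO.
  destruct (urysohn X HX HLC K O HK HO HKO) as [u [Hu [Hr [H1 H2]]]].
  assert (Z : forall x, ~ O x -> u x = 0).
  { intros x Hx. apply NNPP; intros Hn. apply Hx, H2, closure_incl; auto. }
  exists u; split; auto; split; auto; split; [|split; auto].
  - intros x; indc K x; [rewrite H1; auto; lra|apply Hr].
  - intros x; indc O x; [apply Hr| rewrite Z; auto; lra].
Qed.

Lemma mono_KO K O : compact X K -> in_O X O -> subset X K O -> T K <= T O.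
Proof.
  intros HK HO HKO. destruct (urysohn_ind K O HK (proj1 HO) HKO) as [u [Hu [_ [H1 [H2 _]]]]].
  apply Rle_trans with (zeta u); [apply T_K_lower|apply T_O_upper]; auto.
Qed.

Lemma mono_OK O K : in_O X O -> compact X K -> subset X O K -> T O <= T K.
Proof.
  intros HO HK H. apply T_O_least; auto. intros f Hf Hle. apply T_K_greatest; auto.
  intros g Hg Hg2. apply Zmono; auto. intros x. specialize (Hle x); specialize (Hg2 x).
  pose proof (ind_mono O K x H). lra.
Qed.

Lemma mono_KK K K' : compact X K -> compact X K' -> subset X K K' -> T K <= T K'.
Proof.
  intros HK HK' H. apply T_K_greatest; auto. intros f Hf Hle. apply T_K_lower; auto.
  intros x; pose proof (ind_mono K K' x H); specialize (Hle x); lra.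
Qed.

Lemma mono_OO O O' : in_O X O -> in_O X O' -> subset X O O' -> T O <= T O'.
Proof.
  intros HO HO' H. apply T_O_least; auto. intros f Hf Hle. apply T_O_upper; auto.
  intros x; pose proof (ind_mono O O' x H); specialize (Hle x); lra.
Qed.

Lemma T_ext A B : (forall x, A x <-> B x) -> T A = T B.
Proof. intros H. rewrite (pred_ext X A B H). auto. Qed.

Lemma T_nonneg A : in_A X A -> 0 <= T A.
Proof.
  intros [HK|HO].
  - apply T_K_greatest; auto. intros f Hf Hle. apply Znonneg; auto.
    intros x; pose proof (ind_range X A x); specialize (Hle x); lra.
  - rewrite <- Z0. apply T_O_upper; auto. apply Cc_zero. intros; apply ind_range.
Qed.

Lemma T_mono A A' : in_A X A -> in_A X A' -> subset X A A' -> T A <= T A'.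
Proof.
  intros [H1|H1] [H2|H2] H.
  - apply mono_KK; auto.
  - apply mono_KO; auto.
  - apply mono_OK; auto.
  - apply mono_OO; auto.
Qed.

Lemma support_compact f : Cc X f -> compact X (support X f).
Proof. intros [_ H]; auto. Qed.

Lemma outer_reg K : compact X K ->
  is_glb (fun r => exists O, in_O X O /\ subset X K O /\ r = T O) (T K).
Proof.
  intros HK. split.
  - intros y [O [HO [HKO ->]]]. apply mono_KO; auto.
  - intros b Hb. apply T_K_greatest; auto. intros f Hf Hle.
    apply Rnot_lt_le; intros Hlt.
    assert (Hf0 : forall x, 0 <= f x) by (intros x; pose proof (ind_range X K x); specialize (Hle x); lra).
    assert (Hz : 0 <= zeta f) by (apply Znonneg; auto).
    set (t := (zeta f / b + 1) / 2).
    assert (Hb0 : 0 < b) by lra.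
    assert (Ht1 : 1/2 <= t < 1).
    { unfold t. assert (0 <= zeta f / b) by (apply Rmult_le_pos; [lra| left; apply Rinv_0_lt_compat; lra]).
      assert (zeta f / b < 1). { apply (Rmult_lt_reg_r b); auto. unfold Rdiv; rewrite Rmult_assoc, Rinv_l; lra. }
      lra. }
    assert (Htb : zeta f < t * b).
    { unfold t. replace ((zeta f / b + 1) / 2 * b) with ((zeta f + b) / 2) by (field; lra). lra. }
    set (O := fun x => t < f x).
    assert (HO : in_O X O).
    { split; [apply cont_gt, Hf|].
      apply (compact_closed_subset X _ _ (support_compact f Hf)); [apply closure_closed|].
      apply closure_mono. intros x Hx; unfold O in Hx; lra. }
    assert (H1 : b <= T O).
    { apply Hb. exists O; split; auto. split; auto. intros x Kx. unfold O.
      specialize (Hle x); rewrite ind_in in Hle; auto. lra. }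
    assert (H2 : T O <= zeta (fun x => / t * f x)).
    { apply T_O_least; auto. intros g Hg Hgle. apply Zmono; auto.
      - apply Cc_comp with (phi := fun s => / t * s); auto; [reg|lra].
      - intros x. specialize (Hgle x). revert Hgle. indc O x; intros Hgle.
        + unfold O in Hi. apply Rle_trans with 1; auto.
          apply (Rmult_le_reg_l t); [lra|]. rewrite <- Rmult_assoc, Rinv_r; lra.
        + assert (0 <= / t * f x) by (apply Rmult_le_pos; [left; apply Rinv_0_lt_compat; lra|auto]). lra. }
    rewrite Zhom in H2; auto.
    assert (/ t * zeta f < b).
    { apply (Rmult_lt_reg_l t); [lra|]. rewrite <- Rmult_assoc, Rinv_r; lra. }
    lra.
Qed.



Lemma inner_bound (A : X -> Prop) f b : Cc X f -> (forall x, f x <= indicator X A x) ->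
  (forall E, compact X E -> subset X E A -> T E <= b) -> zeta f <= b.
Proof.
  intros Hf Hle Hb.
  destruct (proj1 (proj2 HQ) (support X f) (support_compact f Hf)) as [N [HN HL]].
  set (pf := fun x => pos (f x)).
  assert (Hpf : Cc X pf) by (apply Cc_comp; [apply pos_cont|apply pos_0; lra|auto]).
  apply Rle_trans with (zeta pf).
  { apply Zmono; auto. intros x; apply pos_ge. }
  apply (approx_le _ _ N HN). intros t Ht.
  set (ht := fun x => (fun s => pos (s - t)) (f x)).
  assert (Hht : Cc X ht).
  { apply (Cc_comp X (fun s => pos (s - t)) f); auto. unfold pos; reg.
    apply pos_0; lra. }
  set (E := fun x => t <= f x).
  assert (HE : compact X E).
  { apply (compact_closed_subset X _ _ (support_compact f Hf)).
    - unfold is_closed. apply (open_ext X (fun x => f x < t)); [intros x; unfold E; lra|].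
      apply cont_lt, Hf.
    - intros x Hx. apply closure_incl. unfold E in Hx. lra. }
  assert (HEA : subset X E A).
  { intros x Hx. unfold E in Hx. apply NNPP; intros Hn. specialize (Hle x).
    rewrite ind_out in Hle; auto. lra. }
  assert (H1 : zeta ht <= T E).
  { apply T_K_greatest; auto. intros g Hg Hgle. apply Zmono; auto.
    intros x. specialize (Hgle x). specialize (Hle x). pose proof (ind_range X A x).
    unfold ht. cbv beta. revert Hgle. indc E x; intros Hgle.
    - apply pos_le; lra.
    - unfold E in Hi. rewrite pos_0; lra. }
  assert (H2 : Rabs (zeta pf - zeta ht) <= N * t).
  { apply HL; auto.
    - apply supp_sub. intros x Hx; unfold pf; rewrite Hx; apply pos_0; lra.
    - apply supp_sub. intros x Hx; unfold ht; cbv beta; rewrite Hx; apply pos_0; lra.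
    - split; [lra|]. intros x. unfold pf, ht. cbv beta. apply pos_lip; lra. }
  pose proof (Rle_abs (zeta pf - zeta ht)). specialize (Hb E HE HEA). lra.
Qed.

Lemma inner_reg O : in_O X O -> is_lub (fun r => exists K, in_K X K /\ subset X K O /\ r = T K) (T O).
Proof.
  intros HO. split.
  - intros y [K [HK [HKO ->]]]. apply mono_KO; auto.
  - intros b Hb. apply T_O_least; auto. intros f Hf Hle. apply (inner_bound O); auto.
    intros E HE HEO. apply Hb. exists E; auto.
Qed.

Lemma sep K1 K2 : compact X K1 -> compact X K2 -> (forall x, ~ (K1 x /\ K2 x)) ->
  exists u1 u2, Cc X u1 /\ Cc X u2 /\ (forall x, 0 <= u1 x <= 1) /\ (forall x, 0 <= u2 x <= 1) /\
    (forall x, K1 x -> u1 x = 1) /\ (forall x, K2 x -> u2 x = 1) /\ (forall x, u1 x = 0 \/ u2 x = 0).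
Proof.
  intros H1 H2 Hd.
  assert (HK2c : is_open X (fun x => ~ K2 x)) by (apply compact_is_closed; auto).
  assert (HK12 : subset X K1 (fun x => ~ K2 x)) by (intros x Hx Hx2; apply (Hd x); auto).
  destruct (urysohn_ind K1 (fun x => ~ K2 x) H1 HK2c HK12) as [u [Hu [Hur [Hu1 [_ Hu0]]]]].
  destruct (urysohn X HX HLC K2 (fun _ => True) H2 (open_full X) (fun x _ => I)) as [v [Hv [Hvr [Hv1 _]]]].
  assert (Hc1 : continuity (fun s => pos (2 * s - 1))).
  { unfold pos; reg. }
  assert (Hc2 : continuity (fun s => pos (1 - 2 * s))).
  { unfold pos; reg. }
  exists (fun x => (fun s => pos (2 * s - 1)) (u x)).
  exists (fun x => Rmin (v x) ((fun s => pos (1 - 2 * s)) (u x))).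
  split; [apply (Cc_comp X (fun s => pos (2 * s - 1)) u Hc1); [apply pos_0; lra|auto]|].
  split.
  { apply (Cc_of1 X v); auto. apply cont_min; [apply Hv|apply (cont_comp X (fun s => pos (1 - 2*s)) u Hc2), Hu].
    intros x Hx. rewrite Hx. cbv beta. apply Rmin_left. apply pos_ge0. }
  cbv beta. split; [|split; [|split; [|split]]].
  - intros x. specialize (Hur x). split; [apply pos_ge0|apply pos_le; lra].
  - intros x. specialize (Hur x); specialize (Hvr x). split.
    + apply Rmin_glb; [lra|apply pos_ge0].
    + apply Rle_trans with (v x); [apply Rmin_l|lra].
  - intros x Hx. specialize (Hu1 x). rewrite ind_in in Hu1; auto. specialize (Hur x).
    replace (u x) with 1 by lra. rewrite pos_id; lra.
  - intros x Hx. rewrite Hv1; auto. rewrite Hu0; [|tauto]. rewrite pos_id; [|lra].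
    replace (1 - 2 * 0) with 1 by lra. apply Rmin_left; lra.
  - intros x. specialize (Hvr x). destruct (Rle_dec (u x) (1/2)).
    + left. apply pos_0; lra.
    + right. rewrite (pos_0 (1 - 2 * u x)); [|lra]. apply Rmin_right; lra.
Qed.

Lemma ind_nonneg_le (A : X -> Prop) f x : (forall x, indicator X A x <= f x) -> 0 <= f x.
Proof. intros H. pose proof (ind_range X A x). specialize (H x). lra. Qed.

Lemma add_KK K1 K2 : compact X K1 -> compact X K2 -> (forall x, ~ (K1 x /\ K2 x)) ->
  T (fun x => K1 x \/ K2 x) = T K1 + T K2.
Proof.
  intros H1 H2 Hd.
  assert (HU : compact X (fun x => K1 x \/ K2 x)) by (apply compact_union; auto).
  destruct (sep K1 K2 H1 H2 Hd) as [u1 [u2 [Cu1 [Cu2 [R1 [R2 [E1 [E2 D]]]]]]]].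
  apply Rle_antisym.
  - assert (Key : forall f1 f2, Cc X f1 -> Cc X f2 -> (forall x, indicator X K1 x <= f1 x) ->
               (forall x, indicator X K2 x <= f2 x) -> T (fun x => K1 x \/ K2 x) <= zeta f1 + zeta f2).
    { intros f1 f2 Hf1 Hf2 Hl1 Hl2.
      set (p1 := fun x => Rmin (f1 x) (u1 x)). set (p2 := fun x => Rmin (f2 x) (u2 x)).
      assert (Cp1 : Cc X p1) by (apply Cc_min; auto).
      assert (Cp2 : Cc X p2) by (apply Cc_min; auto).
      assert (P1 : forall x, 0 <= p1 x).
      { intros x; unfold p1; apply Rmin_glb; [apply (ind_nonneg_le K1); auto|apply R1]. }
      assert (P2 : forall x, 0 <= p2 x).
      { intros x; unfold p2; apply Rmin_glb; [apply (ind_nonneg_le K2); auto|apply R2]. }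
      apply Rle_trans with (zeta (fun x => p1 x + p2 x)).
      + apply T_K_lower; auto. apply Cc_plus; auto.
        intros x. specialize (P1 x); specialize (P2 x). indc (fun x => K1 x \/ K2 x) x; [|lra].
        destruct Hi as [Hk|Hk].
        * unfold p1. rewrite E1; auto. specialize (Hl1 x); rewrite ind_in in Hl1; auto.
          rewrite Rmin_right; lra.
        * unfold p2. rewrite E2; auto. specialize (Hl2 x); rewrite ind_in in Hl2; auto.
          rewrite Rmin_right; lra.
      + rewrite Zdisj; auto.
        * apply Rplus_le_compat; apply Zmono; auto; intros x; apply Rmin_l.
        * intros x. destruct (D x) as [Z|Z]; [left; unfold p1|right; unfold p2]; rewrite Z;
            apply Rmin_right; [apply (ind_nonneg_le K1)|apply (ind_nonneg_le K2)]; auto. }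
    assert (forall f2, Cc X f2 -> (forall x, indicator X K2 x <= f2 x) ->
              T (fun x => K1 x \/ K2 x) - zeta f2 <= T K1).
    { intros f2 Hf2 Hl2. apply T_K_greatest; auto. intros f1 Hf1 Hl1.
      pose proof (Key f1 f2 Hf1 Hf2 Hl1 Hl2). lra. }
    assert (T (fun x => K1 x \/ K2 x) - T K1 <= T K2).
    { apply T_K_greatest; auto. intros f2 Hf2 Hl2. pose proof (H f2 Hf2 Hl2). lra. }
    lra.
  - apply T_K_greatest; auto. intros g Hg Hl.
    set (p1 := fun x => Rmin (g x) (u1 x)). set (p2 := fun x => Rmin (g x) (u2 x)).
    assert (G0 : forall x, 0 <= g x) by (intros x; apply (ind_nonneg_le _ g x Hl)).
    assert (Cp1 : Cc X p1) by (apply Cc_min; auto).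
    assert (Cp2 : Cc X p2) by (apply Cc_min; auto).
    assert (P1 : forall x, 0 <= p1 x) by (intros x; unfold p1; apply Rmin_glb; [apply G0|apply R1]).
    assert (P2 : forall x, 0 <= p2 x) by (intros x; unfold p2; apply Rmin_glb; [apply G0|apply R2]).
    assert (Z1 : forall x, u1 x = 0 -> p1 x = 0) by (intros x Z; unfold p1; rewrite Z; apply Rmin_right, G0).
    assert (Z2 : forall x, u2 x = 0 -> p2 x = 0) by (intros x Z; unfold p2; rewrite Z; apply Rmin_right, G0).
    assert (T K1 <= zeta p1).
    { apply T_K_lower; auto. intros x. indc K1 x; [|apply P1].
      unfold p1. rewrite E1; auto. specialize (Hl x). rewrite ind_in in Hl; [|left; auto].
      rewrite Rmin_right; lra. }
    assert (T K2 <= zeta p2).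
    { apply T_K_lower; auto. intros x. indc K2 x; [|apply P2].
      unfold p2. rewrite E2; auto. specialize (Hl x). rewrite ind_in in Hl; [|right; auto].
      rewrite Rmin_right; lra. }
    assert (zeta (fun x => p1 x + p2 x) <= zeta g).
    { apply Zmono; auto. apply Cc_plus; auto. intros x.
      destruct (D x) as [Z|Z]; [rewrite (Z1 x Z)|rewrite (Z2 x Z)]; [unfold p2|unfold p1];
        pose proof (Rmin_l (g x) (u2 x)); pose proof (Rmin_l (g x) (u1 x)); lra. }
    rewrite Zdisj in H3; auto; [lra|].
    intros x. destruct (D x) as [Z|Z]; auto.
Qed.


Lemma in_O_minus W K : in_O X W -> compact X K -> in_O X (fun x => W x /\ ~ K x).
Proof.
  intros [HW HWc] HK. split.
  - apply open_inter; auto. apply compact_is_closed; auto.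
  - apply (compact_closed_subset X _ _ HWc); [apply closure_closed|]. apply closure_mono. intros x [? ?]; auto.
Qed.

Lemma add_OO O1 O2 : in_O X O1 -> in_O X O2 -> (forall x, ~ (O1 x /\ O2 x)) ->
  in_O X (fun x => O1 x \/ O2 x) -> T (fun x => O1 x \/ O2 x) = T O1 + T O2.
Proof.
  intros H1 H2 Hd HU. apply Rle_antisym.
  - apply T_O_least; auto. intros f Hf Hle. apply (inner_bound _ f _ Hf Hle).
    intros E HE HEU.
    set (E1 := fun x => E x /\ ~ O2 x). set (E2 := fun x => E x /\ ~ O1 x).
    assert (C1 : compact X E1) by (apply compact_closed_inter; auto; apply closed_compl_open, H2).
    assert (C2 : compact X E2) by (apply compact_closed_inter; auto; apply closed_compl_open, H1).
    rewrite (T_ext E (fun x => E1 x \/ E2 x)).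
    + rewrite add_KK; auto.
      * apply Rplus_le_compat; apply mono_KO; auto.
        -- intros x [Ex Hx]. destruct (HEU x Ex); tauto.
        -- intros x [Ex Hx]. destruct (HEU x Ex); tauto.
      * intros x [[Ex A] [_ B]]. destruct (HEU x Ex); tauto.
    + intros x; unfold E1, E2; split.
      * intros Ex. destruct (HEU x Ex) as [A|A]; [left|right]; split; auto; intros B; apply (Hd x); auto.
      * tauto.
  - assert (Key : forall f1 f2, Cc X f1 -> Cc X f2 -> (forall x, f1 x <= indicator X O1 x) ->
       (forall x, f2 x <= indicator X O2 x) -> zeta f1 + zeta f2 <= T (fun x => O1 x \/ O2 x)).
    { intros f1 f2 Hf1 Hf2 Hl1 Hl2.
      set (q1 := fun x => pos (f1 x)). set (q2 := fun x => pos (f2 x)).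
      assert (Cq1 : Cc X q1) by (apply Cc_comp; auto; [apply pos_cont|apply pos_0; lra]).
      assert (Cq2 : Cc X q2) by (apply Cc_comp; auto; [apply pos_cont|apply pos_0; lra]).
      apply Rle_trans with (zeta (fun x => q1 x + q2 x)).
      - rewrite Zdisj; auto; try (intros; apply pos_ge0).
        + apply Rplus_le_compat; apply Zmono; auto; intros; apply pos_ge.
        + intros x. specialize (Hl1 x); specialize (Hl2 x). destruct (classic (O1 x)).
          * right. unfold q2. apply pos_0. rewrite ind_out in Hl2; [lra|]. intros B; apply (Hd x); auto.
          * left. unfold q1. apply pos_0. rewrite ind_out in Hl1; [lra|auto].
      - apply T_O_upper; auto. apply Cc_plus; auto. intros x.
        specialize (Hl1 x); specialize (Hl2 x). unfold q1, q2.
        pose proof (ind_range X O1 x); pose proof (ind_range X O2 x).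
        indc (fun x => O1 x \/ O2 x) x.
        + destruct (classic (O1 x)) as [A|A].
          * rewrite (pos_0 (f2 x)); [apply pos_le in Hl1; lra|].
            rewrite ind_out in Hl2; [lra|]. intros B; apply (Hd x); auto.
          * rewrite (pos_0 (f1 x)); [|rewrite ind_out in Hl1; auto; lra].
            apply pos_le in Hl2; lra.
        + rewrite (pos_0 (f1 x)), (pos_0 (f2 x)); [lra| |];
            [rewrite ind_out in Hl2|rewrite ind_out in Hl1]; auto; lra. }
    assert (forall f2, Cc X f2 -> (forall x, f2 x <= indicator X O2 x) ->
              T O1 <= T (fun x => O1 x \/ O2 x) - zeta f2).
    { intros f2 Hf2 Hl2. apply T_O_least; auto. intros f1 Hf1 Hl1.
      pose proof (Key f1 f2 Hf1 Hf2 Hl1 Hl2). lra. }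
    assert (T O2 <= T (fun x => O1 x \/ O2 x) - T O1).
    { apply T_O_least; auto. intros f2 Hf2 Hl2. pose proof (H f2 Hf2 Hl2). lra. }
    lra.
Qed.

Lemma lemma_M C K W : compact X C -> compact X K -> subset X K C -> in_O X W -> subset X C W ->
  T C <= T K + T (fun x => W x /\ ~ K x).
Proof.
  intros HC HK HKC HW HCW.
  assert (HWK : in_O X (fun x => W x /\ ~ K x)) by (apply in_O_minus; auto).
  assert (T C - T (fun x => W x /\ ~ K x) <= T K); [|lra].
  apply T_K_greatest; auto. intros g Hg Hgl.
  assert (G0 : forall x, 0 <= g x) by (intros x; apply (ind_nonneg_le _ g x Hgl)).
  destruct (urysohn X HX HLC K W HK (proj1 HW) (fun x Hx => HCW x (HKC x Hx))) as [v [Hv [Hvr [Hv1 Hvs]]]].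
  set (S := fun x => C x \/ support X v x).
  assert (HS : compact X S) by (apply compact_union; auto; apply support_compact; auto).
  assert (HSW : subset X S W) by (intros x [Hx|Hx]; auto).
  destruct (urysohn X HX HLC S W HS (proj1 HW) HSW) as [w [Hw [Hwr [Hw1 Hws]]]].
  assert (Hw0 : forall x, ~ W x -> w x = 0).
  { intros x Hx. apply NNPP; intros Hn. apply Hx, Hws, closure_incl; auto. }
  set (g2 := fun x => Rmin (g x) (v x)).
  assert (Cg2 : Cc X g2) by (apply Cc_min; auto).
  assert (G2r : forall x, 0 <= g2 x <= v x).
  { intros x; unfold g2; split; [apply Rmin_glb; [apply G0|apply Hvr]|apply Rmin_r]. }
  assert (G2K : forall x, K x -> g2 x = 1).
  { intros x Kx. unfold g2. rewrite Hv1; auto. specialize (Hgl x). rewrite ind_in in Hgl; auto.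
    apply Rmin_right; lra. }
  set (F := fun x => w x + g2 x).
  assert (CF : Cc X F) by (apply Cc_plus; auto).
  set (phi1 := fun s => pos (s - 1)). set (phi3 := fun s => s - 2 * pos (s - 1)).
  assert (Cphi1 : continuity phi1) by (unfold phi1, pos; reg).
  assert (Cphi3 : continuity phi3) by (unfold phi3, pos; reg).
  assert (P10 : phi1 0 = 0) by (unfold phi1; apply pos_0; lra).
  assert (P30 : phi3 0 = 0) by (unfold phi3; rewrite pos_0; lra).
  assert (Pt : forall x, phi1 (F x) = g2 x /\ phi1 (F x) + phi3 (F x) = w x).
  { intros x. unfold phi1, phi3, F. pose proof (Hwr x). pose proof (G2r x). pose proof (Hvr x).
    destruct (classic (g2 x = 0)) as [Z|Z].
    - rewrite Z. rewrite pos_0; lra.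
    - assert (Hvx : v x <> 0).
      { intros E. apply Z. unfold g2. rewrite E. apply Rmin_right, G0. }
      assert (Sx : S x) by (right; apply closure_incl; auto).
      rewrite (Hw1 x Sx). replace (1 + g2 x - 1) with (g2 x) by lra. rewrite pos_id; lra. }
  assert (EW : zeta w = zeta g2 + zeta (fun x => phi3 (F x))).
  { rewrite (Zext w (fun x => phi1 (F x) + phi3 (F x))); [|intros x; symmetry; apply Pt].
    rewrite (Zadd F phi1 phi3); auto. f_equal. apply Zext. intros x; apply Pt. }
  assert (H1 : T C <= zeta w).
  { apply T_K_lower; auto. intros x. indc C x; [rewrite Hw1; [lra|left; auto]|apply Hwr]. }
  assert (H2 : zeta (fun x => phi3 (F x)) <= T (fun x => W x /\ ~ K x)).
  { apply T_O_upper; auto. apply Cc_comp; auto. intros x.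
    destruct (Pt x) as [A B]. assert (E3 : phi3 (F x) = w x - g2 x) by lra. rewrite E3.
    pose proof (Hwr x). pose proof (G2r x).
    indc (fun x => W x /\ ~ K x) x; [lra|].
    destruct (classic (W x)) as [Wx|Wx].
    - assert (Kx : K x) by tauto. rewrite G2K, Hw1; auto. lra. left; auto.
    - rewrite Hw0; auto. lra. }
  assert (H3 : zeta g2 <= zeta g) by (apply Zmono; auto; intros x; apply Rmin_l).
  lra.
Qed.

Lemma add_KO_U K O : compact X K -> in_O X O -> (forall x, ~ (K x /\ O x)) ->
  in_O X (fun x => K x \/ O x) -> T (fun x => K x \/ O x) = T K + T O.
Proof.
  intros HK HO Hd HU. apply Rle_antisym.
  - apply T_O_least; auto. intros f Hf Hle. apply (inner_bound _ f _ Hf Hle).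
    intros E HE HEU.
    assert (HKE : compact X (fun x => K x \/ E x)) by (apply compact_union; auto).
    apply Rle_trans with (T (fun x => K x \/ E x)).
    { apply mono_KK; auto. intros x; auto. }
    apply Rle_trans with (T K + T (fun x => (K x \/ O x) /\ ~ K x)).
    { apply lemma_M; auto. intros x; auto. intros x [Hx|Hx]; auto. }
    apply Rplus_le_compat_l. apply mono_OO; auto. apply in_O_minus; auto.
    intros x [[A|A] B]; tauto.
  - assert (T O <= T (fun x => K x \/ O x) - T K); [|lra].
    apply T_O_least; auto. intros f Hf Hle. apply (inner_bound _ f _ Hf Hle).
    intros E HE HEO.
    assert (T K + T E <= T (fun x => K x \/ O x)); [|lra].
    rewrite <- add_KK; auto.
    + apply mono_KO; auto. apply compact_union; auto. intros x [A|A]; auto.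
    + intros x [A B]. apply (Hd x); auto.
Qed.

Lemma add_KO_C K O : compact X K -> in_O X O -> (forall x, ~ (K x /\ O x)) ->
  compact X (fun x => K x \/ O x) -> T (fun x => K x \/ O x) = T K + T O.
Proof.
  intros HK HO Hd HC. set (C := fun x => K x \/ O x). fold C in HC. apply Rle_antisym.
  - apply Rnot_lt_le; intros Hlt.
    set (eps := T C - (T K + T O)).
    assert (Heps : 0 < eps) by (unfold eps; lra).
    assert (HWex : exists W, in_O X W /\ subset X C W /\ T W < T C + eps).
    { apply NNPP; intros Hn. destruct (outer_reg C HC) as [_ B].
      assert (T C + eps <= T C); [|lra].
      apply B. intros y [W [HW [HCW ->]]]. apply Rnot_lt_le; intros Hl. apply Hn. exists W; auto. }
    destruct HWex as [W [HW [HCW HTW]]].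
    assert (M1 : T C <= T K + T (fun x => W x /\ ~ K x)).
    { apply lemma_M; auto. intros x Hx; left; auto. }
    assert (HWC : in_O X (fun x => W x /\ ~ C x)) by (apply in_O_minus; auto).
    assert (M2 : T (fun x => W x /\ ~ K x) <= T O + T (fun x => W x /\ ~ C x)).
    { apply T_O_least; [apply in_O_minus; auto|]. intros f Hf Hle. apply (inner_bound _ f _ Hf Hle).
      intros E HE HEW.
      set (E1 := fun x => E x /\ C x). set (E2 := fun x => E x /\ ~ O x).
      assert (C1 : compact X E1) by (apply compact_closed_inter; auto; apply compact_is_closed; auto).
      assert (C2 : compact X E2) by (apply compact_closed_inter; auto; apply closed_compl_open, HO).
      rewrite (T_ext E (fun x => E1 x \/ E2 x)).
      + rewrite add_KK; auto.
        * apply Rplus_le_compat; [apply mono_KO|apply mono_KO]; auto.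
          -- intros x [Ex [Kx|Ox]]; auto. exfalso. destruct (HEW x Ex); tauto.
          -- intros x [Ex Hx]. destruct (HEW x Ex). split; auto. unfold C; tauto.
        * intros x [[Ex [Kx|Ox]] [_ B]]; [destruct (HEW x Ex); tauto|tauto].
      + intros x; unfold E1, E2, C; split; [|tauto].
        intros Ex. destruct (classic (O x)); [left|right]; tauto. }
    assert (M3 : T (fun x => W x /\ ~ C x) <= T W - T C).
    { apply T_O_least; auto. intros f Hf Hle. apply (inner_bound _ f _ Hf Hle).
      intros E HE HEW.
      assert (T C + T E <= T W); [|lra].
      rewrite <- add_KK; auto.
      + apply mono_KO; auto. apply compact_union; auto. intros x [A|A]; auto. apply HEW; auto.
      + intros x [A B]. destruct (HEW x B); tauto. }
    unfold eps in HTW. lra.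
  - assert (T O <= T C - T K); [|lra].
    apply T_O_least; auto. intros f Hf Hle. apply (inner_bound _ f _ Hf Hle).
    intros E HE HEO.
    assert (T K + T E <= T C); [|lra].
    rewrite <- add_KK; auto.
    + apply mono_KK; auto. apply compact_union; auto. intros x [A|A]; unfold C; auto.
    + intros x [A B]. apply (Hd x); auto.
Qed.

Lemma add_KO K O : compact X K -> in_O X O -> (forall x, ~ (K x /\ O x)) ->
  in_A X (fun x => K x \/ O x) -> T (fun x => K x \/ O x) = T K + T O.
Proof.
  intros HK HO Hd HU. destruct (classic (compact X (fun x => K x \/ O x))) as [Hc|Hc].
  - apply add_KO_C; auto.
  - destruct HU as [HU|HU]; [contradiction|]. apply add_KO_U; auto.
Qed.

Lemma additivity A A' : in_A X A -> in_A X A' -> (forall x, ~ (A x /\ A' x)) ->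
  in_A X (fun x => A x \/ A' x) -> T (fun x => A x \/ A' x) = T A + T A'.
Proof.
  intros H1 H2 Hd HU.
  destruct (classic (compact X A)) as [C1|C1]; destruct (classic (compact X A')) as [C2|C2].
  - apply add_KK; auto.
  - destruct H2 as [H2|H2]; [contradiction|]. apply add_KO; auto.
  - destruct H1 as [H1|H1]; [contradiction|].
    rewrite (T_ext _ (fun x => A' x \/ A x)); [|intros; tauto].
    rewrite add_KO; auto; [lra| |].
    + intros x [? ?]; apply (Hd x); auto.
    + eapply (proj1 (iff_refl _)). destruct HU as [HU|HU]; [left|right].
      * eapply compact_ext; [|exact HU]. intros; tauto.
      * destruct HU as [HU1 HU2]. split.
        -- eapply open_ext; [|exact HU1]. intros; simpl; tauto.
        -- rewrite (pred_ext X (fun x => A' x \/ A x) (fun x => A x \/ A' x)); auto. intros; tauto.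
  - destruct H1 as [H1|H1]; [contradiction|]. destruct H2 as [H2|H2]; [contradiction|].
    destruct HU as [HU|HU].
    + exfalso. apply C1. apply (compact_ext X (fun x => (A x \/ A' x) /\ ~ A' x)).
      * intros x; split; [tauto|]. intros Ax; split; auto. intros B; apply (Hd x); auto.
      * apply compact_closed_inter; auto. apply closed_compl_open, H2.
    + apply add_OO; auto.
Qed.

Lemma main_tm : topological_measure X T.
Proof.
  split; [|split; [|split; [|split]]].
  - apply T_nonneg.
  - apply additivity.
  - apply T_mono.
  - apply outer_reg.
  - apply inner_reg.
Qed.

End Meas.

Theorem proposition2p4 (X : TopSpace) (zeta : (X -> R) -> R) :
  hausdorff X -> locally_compact X -> quasi_integral X zeta ->
  topological_measure X (tau_of X zeta).
Proof.
  intros HX HLC HQ. exact (main_tm X zeta HX HLC HQ).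
Qed.
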